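(* Let $\Xi$ be a standard manageable groupoid with unit space $X$ and main orbit $X_0$. Then the map $(\mathrm r,\mathrm d):\Xi(X_0)\to X_0\times X_0$, $\xi\mapsto(\mathrm r(\xi),\mathrm d(\xi))$, is a homeomorphism.
   Context: Manageable groupoid: Hausdorff locally compact $\sigma$-compact groupoid with compact unit space $X$, étale and amenable. It is standard if there is a closed invariant subset $X_\infty\subset X$ such that $X_0:=X\setminus X_\infty$ is a dense orbit (for the equivalence relation $x\cong y$ iff some $\xi$ has $\mathrm d(\xi)=x$, $\mathrm r(\xi)=y$), the isotropy groups $\Xi^z_z=\{\xi:\mathrm r(\xi)=z=\mathrm d(\xi)\}$ are trivial for $z\in X_0$, and $\Xi(X_0)=\{\xi:\mathrm r(\xi),\mathrm d(\xi)\in X_0\}$ is second countable in the subspace topology. $X_0$ is called the main orbit. *)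

(* Defs.v *)
From HB Require Import structures.
From mathcomp Require Import all_boot all_order all_algebra.
From mathcomp Require Import all_classical all_reals topology normedtype esum.
From mathcomp Require Import Rstruct Rstruct_topology.
From Stdlib Require Rdefinitions.
Local Notation R := Rdefinitions.R.
Set Implicit Arguments. Unset Strict Implicit. Unset Printing Implicit Defensive.
Import Order.TTheory GRing.Theory Num.Theory.
Local Open Scope classical_set_scope.
Local Open Scope ring_scope.

(* A (topological) groupoid with arrow space G and unit space X.
   [mul g h] is the product "g h", meaningful when d g = r h;
   [u x] is the unit at x. *)
Record groupoid_data (G X : Type) := GroupoidData {
  gr : G -> X;
  gd : G -> X;
  gmul : G -> G -> G;
  ginv : G -> G;
  gunit : X -> G }.

Definition groupoid_axioms (G X : Type) (Γ : groupoid_data G X) : Prop :=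
  let r := gr Γ in let d := gd Γ in let m := gmul Γ in
  let i := ginv Γ in let u := gunit Γ in
  [/\ forall x, r (u x) = x /\ d (u x) = x,
      forall g h, d g = r h -> r (m g h) = r g /\ d (m g h) = d h,
      forall g h k, d g = r h -> d h = r k -> m (m g h) k = m g (m h k),
      forall g, m (u (r g)) g = g /\ m g (u (d g)) = g &
      forall g, [/\ r (i g) = d g, d (i g) = r g,
                    m g (i g) = u (r g) & m (i g) g = u (d g)] ].

Definition topological_groupoid (G X : topologicalType)
    (Γ : groupoid_data G X) : Prop :=
  [/\ groupoid_axioms Γ,
      continuous (gr Γ) /\ continuous (gd Γ),
      continuous (ginv Γ), continuous (gunit Γ) &
      {within [set p : G * G | gd Γ p.1 = gr Γ p.2],
        continuous (fun p : G * G => gmul Γ p.1 p.2)} ].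

Definition local_homeomorphism (T U : topologicalType) (f : T -> U) : Prop :=
  continuous f /\
  forall t, exists O : set T, [/\ open O, O t, {in O &, injective f} &
     forall V, open V -> V `<=` O -> open (f @` V)].

Definition etale (G X : topologicalType) (Γ : groupoid_data G X) : Prop :=
  local_homeomorphism (gr Γ).

Definition sigma_compact (T : topologicalType) : Prop :=
  exists K : nat -> set T, (forall n, compact (K n)) /\ \bigcup_n K n = [set: T].

Definition compactly_supported (T : topologicalType) (f : T -> R) : Prop :=
  exists K : set T, compact K /\ forall t, ~ K t -> f t = 0.

(* Topological amenability of an etale groupoid (Brown--Ozawa, Def. 5.6.13):
   for every compact K of arrows and eps > 0 there is a nonnegative
   f in C_c(G) with |sum_{xi in G^{r eta}} f xi - 1| < eps and
   sum_{xi in G^{d eta}} |f (eta xi) - f xi| < eps for all eta in K. *)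
Definition amenable_etale (G X : topologicalType) (Γ : groupoid_data G X)
  : Prop :=
  forall (K : set G) (eps : R), compact K -> 0 < eps ->
  exists f : G -> R,
    [/\ continuous f, (forall g, 0 <= f g), compactly_supported f &
        forall eta, K eta ->
          (`| \esum_(xi in [set xi | gr Γ xi = gr Γ eta]) (f xi)%:E - 1%E |
             < eps%:E)%E /\
          (\esum_(xi in [set xi | gr Γ xi = gd Γ eta])
             (`| f (gmul Γ eta xi) - f xi |)%:E < eps%:E)%E ].

Definition manageable (G X : topologicalType) (Γ : groupoid_data G X) : Prop :=
  [/\ topological_groupoid Γ, hausdorff_space G, locally_compact [set: G],
      sigma_compact G /\ compact [set: X] & etale Γ /\ amenable_etale Γ].

Definition orbit_equiv (G X : Type) (Γ : groupoid_data G X) (x y : X) : Prop :=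
  exists xi, gd Γ xi = x /\ gr Γ xi = y.

Definition invariant_set (G X : Type) (Γ : groupoid_data G X) (A : set X) :=
  forall x y, orbit_equiv Γ x y -> A x -> A y.

Definition restr_arrows (G X : Type) (Γ : groupoid_data G X) (A : set X)
  : set G := [set xi | A (gr Γ xi) /\ A (gd Γ xi)].

Definition second_countable_on (T : topologicalType) (S : set T) : Prop :=
  exists B : nat -> set T,
    (forall n, exists U, open U /\ B n = U `&` S) /\
    (forall U, open U -> forall t, U t -> S t ->
       exists n, B n t /\ B n `<=` U `&` S).

Definition standard (G X : topologicalType) (Γ : groupoid_data G X)
  (X0 : set X) : Prop :=
  manageable Γ /\
  [/\ closed (~` X0), invariant_set Γ (~` X0),
      (exists x0, X0 = [set y | orbit_equiv Γ x0 y]) /\ dense X0,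
      (forall z, X0 z -> forall xi, gr Γ xi = z -> gd Γ xi = z ->
         xi = gunit Γ z) &
      second_countable_on (restr_arrows Γ X0)].

Definition homeomorphism_on (T U : topologicalType) (A : set T) (B : set U)
  (f : T -> U) : Prop :=
  [/\ forall t, A t -> B (f t), {in A &, injective f},
      {within A, continuous f} &
      exists g : U -> T,
        [/\ forall s, B s -> A (g s), forall s, B s -> f (g s) = s &
            {within B, continuous g}]].

(* Main.v *)
Require Import Defs.
From mathcomp Require Import all_boot all_classical topology.
Local Open Scope classical_set_scope.

Lemma open_minus1 (T : topologicalType) (V : set T) (a : T) :
  hausdorff_space T -> open V -> open (V `\` [set a]).
Proof.
move=> hT oV; apply: openI => //; apply: closed_openC.
by apply: accessible_closed_set1; apply: hausdorff_accessible.
Qed.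

Lemma baire_count (T : topologicalType) (O : set T) (a : nat -> T) :
  hausdorff_space T -> compact [set: T] -> open O -> O !=set0 ->
  O `<=` range a -> exists2 y, O y & open [set y].
Proof.
move=> hT cT oO [o0 Oo0] Oa; apply: contrapT => Hno.
have step : forall V n, open V -> V !=set0 -> V `<=` O ->
    exists V', [/\ open V', V' !=set0 & closure V' `<=` V `\` [set a n]].
  move=> V n oV [p Vp] VO.
  have [q [Vq qa]] : exists q, V q /\ q <> a n.
    have [pa|pa] := pselect (p = a n); last by exists p.
    apply: contrapT => Hq; apply: Hno; exists p; first exact: VO.
    suff -> : [set p] = V by [].
    apply/seteqP; split => x /=; first by move=> ->.
    move=> Vx; apply: contrapT => xp; apply: Hq; exists x; split => //.
    by rewrite -pa.
  have nq : nbhs q (V `\` [set a n]).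
    by apply: open_nbhs_nbhs; split; [exact: open_minus1|split].
  have [W nW cW] := @compact_regular _ q setT hT cT filterT _ nq.
  exists W°; split; first exact: open_interior.
    by exists q.
  apply: subset_trans cW; apply: closureS; exact: interior_subset.
have [f Hf] : exists f : (set T * nat) -> set T, forall Vn,
    open Vn.1 -> Vn.1 !=set0 -> Vn.1 `<=` O ->
    [/\ open (f Vn), f Vn !=set0 & closure (f Vn) `<=` Vn.1 `\` [set a Vn.2]].
  have := @choice (set T * nat) (set T) (fun Vn V' => open Vn.1 -> Vn.1 !=set0 -> Vn.1 `<=` O ->
    [/\ open V', V' !=set0 & closure V' `<=` Vn.1 `\` [set a Vn.2]]).
  case.
    move=> [V n]; have [[oV [V0 VO]]|] := pselect (open V /\ V !=set0 /\ V `<=` O).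
      have [V' HV'] := step V n oV V0 VO; by exists V'.
    by move=> H; exists set0 => *; exfalso; apply: H.
  by move=> f Hf; exists f.
pose fix S n := if n is m.+1 then f (S m, m) else O.
have HS : forall n, [/\ open (S n), S n !=set0 & S n `<=` O].
  elim=> [|n [o1 n1 s1]]; first by split => //; exists o0.
  have [o2 n2 c2] := Hf (S n, n) o1 n1 s1.
  split => //= x /subset_closure /c2 [] /s1 //.
have HC : forall n, closure (S n.+1) `<=` S n `\` [set a n].
  by move=> n; have [o1 n1 s1] := HS n; have [] := Hf (S n, n) o1 n1 s1.
have dec : forall n m, (n <= m)%N -> S m `<=` S n.
  move=> n m /subnK <-; elim: (m - n)%N => [|k IH] //=.
  by move=> x /subset_closure /HC [] /IH.
pose F := filter_from [set: nat] S.
have FF : ProperFilter F.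
  apply: filter_from_proper; last by move=> i _; have [] := HS i.
  apply: filter_from_filter; first by exists 0%N.
  move=> i j _ _; exists (maxn i j) => // x Sx; split.
    by apply: (dec i (maxn i j)) => //; rewrite leq_maxl.
  by apply: (dec j (maxn i j)) => //; rewrite leq_maxr.
have [p [_ cp]] := cT F FF filterT.
have clp : forall n, closure (S n) p.
  by move=> n B nB; apply: (cp (S n) B) => //; exists n.
have [n _ pn] : range a p.
  by apply: Oa; have [_ _ s0] := HS 0%N; have /HC [/s0] := clp 1%N.
by have /HC [_] := clp n.+1; apply.
Qed.

Lemma countable_orbit (G X : topologicalType) (Γ : groupoid_data G X) (X0 : set X) (x0 : X) :
  groupoid_axioms Γ -> etale Γ -> X0 = [set y | orbit_equiv Γ x0 y] ->
  second_countable_on (restr_arrows Γ X0) ->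
  exists a : nat -> X, X0 `<=` range a.
Proof.
move=> ax [_ et] eX0 [B [_ HB]].
have [hu _ _ _ hi] := ax.
pose P n η := [/\ B n η, restr_arrows Γ X0 η & gr Γ η = x0].
have : forall n, exists xi, (exists η, P n η) -> P n xi.
  move=> n; case: (pselect (exists η, P n η)) => [[η Pη]|ne].
    by exists η.
  by exists (gunit Γ x0).
move=> /choice [xi Hxi].
exists (fun n => gd Γ (xi n)) => y X0y.
have X0x0 : X0 x0 by rewrite eX0; exists (gunit Γ x0); have [? ?] := hu x0; split.
have := X0y; rewrite {1}eX0 => -[α [dα rα]].
have [ri di _ _] := hi α.
have Sη : restr_arrows Γ X0 (ginv Γ α) by split; rewrite ?ri ?di ?dα ?rα.
have [O [oO Oη injO _]] := et (ginv Γ α).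
have [n [Bn BnO]] := HB O oO _ Oη Sη.
have Pn : P n (ginv Γ α) by split; rewrite ?ri.
have [Bxi Sxi rxi] := Hxi n (ex_intro _ _ Pn).
exists n => //.
have -> : xi n = ginv Γ α.
  apply: injO; rewrite ?inE ?ri ?rxi ?dα //.
  by have [] := BnO _ Bxi.
by rewrite di.
Qed.

Lemma ginvK (G X : Type) (Γ : groupoid_data G X) :
  groupoid_axioms Γ -> forall g, ginv Γ (ginv Γ g) = g.
Proof.
rewrite /groupoid_axioms /= => -[hu hm ha hun hi] g.
have [ri di _ _] := hi g.
have [rii dii _ l2] := hi (ginv Γ g).
have [_ _ r3 l3] := hi g.
rewrite -[LHS](proj2 (hun _)) dii ri -l3.
rewrite -ha ?dii ?ri //.
rewrite l2 di; exact: (proj1 (hun g)).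
Qed.

Lemma hausdorff_units (G X : topologicalType) (Γ : groupoid_data G X) :
  groupoid_axioms Γ -> continuous (gunit Γ) -> hausdorff_space G ->
  hausdorff_space X.
Proof.
rewrite /groupoid_axioms /= => -[hu _ _ _ _] cu hG p q cpq.
suff e : gunit Γ p = gunit Γ q.
  by rewrite -(proj1 (hu p)) e (proj1 (hu q)).
apply: hG => A B nA nB.
have [x [Ax Bx]] := cpq _ _ (cu p A nA) (cu q B nB).
by exists (gunit Γ x).
Qed.

Lemma open_point_orbit (G X : topologicalType) (Γ : groupoid_data G X) (X0 : set X) (x0 : X) (y z : X) :
  groupoid_axioms Γ -> continuous (gr Γ) -> continuous (ginv Γ) -> etale Γ ->
  X0 = [set y | orbit_equiv Γ x0 y] -> X0 y -> open [set y] -> X0 z -> open [set z].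
Proof.
move=> ax cr ci [_ et] eX0 X0y oy X0z.
have [hu hm _ _ hi] := ax.
move: X0y X0z; rewrite eX0 => -[α [dα rα]] [β [dβ rβ]].
have [riβ diβ _ _] := hi β.
pose η := gmul Γ α (ginv Γ β).
have cm : gd Γ α = gr Γ (ginv Γ β) by rewrite riβ dα dβ.
have [rη dη] := hm _ _ cm.
have [O [oO Oη injO _]] := et η.
have eW : O `&` gr Γ @^-1` [set y] = [set η].
  apply/seteqP; split => x /=.
    move=> [Ox rx]; apply: injO; rewrite ?inE //.
    by rewrite rx /η rη.
  by move=> ->; split => //; rewrite /η rη.
have oη : open [set η].
  by rewrite -eW; apply: openI => //; move/continuousP: cr; apply.
have eI : ginv Γ @^-1` [set η] = [set ginv Γ η].
  apply/seteqP; split => x /=.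
    by move=> <-; rewrite ginvK.
  by move=> ->; rewrite ginvK.
have oiη : open [set ginv Γ η].
  by rewrite -eI; move/continuousP: ci; apply.
have [O' [oO' O'i _ opO']] := et (ginv Γ η).
have := opO' _ oiη (fun x e => ltac:(rewrite e; exact: O'i)).
rewrite image_set1.
have [-> _ _ _] := hi η.
by rewrite /η dη diβ rβ.
Qed.

Theorem lemma7p2 (G X : topologicalType) (Γ : groupoid_data G X) (X0 : set X) :
  standard Γ X0 ->
  homeomorphism_on (restr_arrows Γ X0) (X0 `*` X0)
    (fun xi => (gr Γ xi, gd Γ xi)).
Proof.
move=> [[[ax [cr cd] ci cu cm] hG _ [_ cX] [et _]] [cC invC [[x0 eX0] _] iso sc]].
have hX := @hausdorff_units _ _ Γ ax cu hG.
have oX0 : open X0 by rewrite -[X0]setCK; apply: closed_openC.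
have [hu hm ha hun hi] := ax.
have X0x0 : X0 x0 by rewrite eX0; exists (gunit Γ x0); have [? ?] := hu x0; split.
have [a Ha] := @countable_orbit _ _ Γ X0 x0 ax et eX0 sc.
have [y0 X0y0 oy0] := @baire_count _ X0 a hX cX oX0 (ex_intro _ x0 X0x0) Ha.
have disc : forall z, X0 z -> open [set z].
  by move=> z; apply: (@open_point_orbit _ _ Γ X0 x0 y0 z ax cr ci et eX0 X0y0 oy0).
split.
- by move=> t [].
- move=> ξ η /[!inE] -[rξ dξ] [rη dη] /= [e1 e2].
  have [riη diη r3 l3] := hi η.
  pose ζ := gmul Γ (ginv Γ η) ξ.
  have c1 : gd Γ (ginv Γ η) = gr Γ ξ by rewrite diη e1.
  have [rζ dζ] := hm _ _ c1.
  have eζ : ζ = gunit Γ (gd Γ η).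
    by apply: iso => //; rewrite ?rζ ?dζ ?riη.
  have c2 : gd Γ η = gr Γ (ginv Γ η) by rewrite riη.
  have -> : ξ = gmul Γ η ζ.
    by rewrite /ζ -ha // r3 -e1 (proj1 (hun ξ)).
  by rewrite eζ (proj2 (hun η)).
- apply: continuous_subspaceT => x.
  by apply: cvg_pair; [exact: cr|exact: cd].
have : forall s : X * X, exists ξ, (X0 `*` X0) s ->
    [/\ restr_arrows Γ X0 ξ, gr Γ ξ = s.1 & gd Γ ξ = s.2].
  move=> [y z]; case: (pselect ((X0 `*` X0) (y, z))); last first.
    by move=> ne; exists (gunit Γ x0) => /ne.
  move=> [/= X0y X0z].
  have := X0y; have := X0z; rewrite {1 2}eX0 => -[α [dα rα]] [β [dβ rβ]].
  have [riα diα _ _] := hi α.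
  have c : gd Γ β = gr Γ (ginv Γ α) by rewrite riα dα dβ.
  have [r1 d1] := hm _ _ c.
  exists (gmul Γ β (ginv Γ α)) => _.
  have e1 : gr Γ (gmul Γ β (ginv Γ α)) = y by rewrite r1.
  have e2 : gd Γ (gmul Γ β (ginv Γ α)) = z by rewrite d1 diα.
  by split => //; split; rewrite ?e1 ?e2.
move=> /choice [g Hg].
exists g; split.
- by move=> s /Hg [].
- by move=> s /Hg [_ e1 e2]; case: s e1 e2 => ? ? /= -> ->.
apply/subspace_continuousP => -[y z] [/= X0y X0z] W nW.
have nyz : nbhs (y, z) [set (y, z)].
  exists ([set y], [set z]); last by move=> [? ?] /= [-> ->].
  by split; apply: open_nbhs_nbhs; split => //; [exact: disc|exact: disc].
apply: filterS nyz => _ -> _; exact: (nbhs_singleton nW).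
Qed.
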